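(* Let $\mathcal{T}$ be a tangle of order $k$ in a connectivity system $(E,\lambda)$, and let $(A, B)$ and $(C, D)$ be two non-sequential $k$-separations of $\lambda$. Then $(A, B)$ is $\mathcal{T}$-equivalent to $(C, D)$ if and only if either $\mathrm{fcl}_{\mathcal{T}}(A)= \mathrm{fcl}_{\mathcal{T}}(C)$ or $\mathrm{fcl}_{\mathcal{T}}(A)= \mathrm{fcl}_{\mathcal{T}}(D)$.
   Context: A connectivity system is a pair $(E,\lambda)$ with $E$ finite and $\lambda$ an integer-valued symmetric submodular function on subsets of $E$. $X$ is $k$-separating if $\lambda(X)\le k$; a $k$-separation is an unordered partition $(X,E-X)$ with $\lambda(X)\le k$. A tangle of order $k$ is a collection $\mathcal T$ of subsets of $E$ with (T1) $\lambda(A)<k$ for $A\in\mathcal T$; (T2) if $\lambda(A)\le k-1$ then $A\in\mathcal T$ or $E-A\in\mathcal T$; (T3) $A\cup B\cup C\ne E$ for $A,B,C\in\mathcal T$; (T4) $E-\{e\}\notin\mathcal T$ for $e\in E$. A set is $\mathcal T$-weak if contained in a member of $\mathcal T$, and $\mathcal T$-strong otherwise. A $\mathcal T$-strong $k$-separating set $X$ is fully closed if $X\cup Y$ is not $k$-separating for every nonempty $\mathcal T$-weak $Y\subseteq E-X$; $\mathrm{fcl}_{\mathcal T}(X)$ is the intersection of all fully closed $k$-separating sets containing $X$. $\mathcal T$-strong $k$-separations $(X,Y),(X',Y')$ are $\mathcal T$-equivalent if $\{\mathrm{fcl}_{\mathcal T}(X),\mathrm{fcl}_{\mathcal T}(Y)\}=\{\mathrm{fcl}_{\mathcal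 T}(X'),\mathrm{fcl}_{\mathcal T}(Y')\}$. A $k$-separating set $X$ is $\mathcal T$-sequential if $E-X$ is $\mathcal T$-strong and $\mathrm{fcl}_{\mathcal T}(E-X)=E$; a $k$-separation is non-sequential if neither of its parts is $\mathcal T$-sequential (such separations are $\mathcal T$-strong). *)

(* Defs.v *)
From mathcomp Require Import all_boot all_order all_algebra.
Set Implicit Arguments. Unset Strict Implicit. Unset Printing Implicit Defensive.
Import Order.TTheory GRing.Theory Num.Theory.
Local Open Scope ring_scope.

Definition connectivity_system (E : finType) (lam : {set E} -> int) : Prop :=
  (forall X : {set E}, lam X = lam (~: X)) /\
  (forall X Y : {set E}, lam (X :|: Y) + lam (X :&: Y) <= lam X + lam Y).

Section Tangles.
Variables (E : finType) (lam : {set E} -> int) (k : int).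

Definition kseparating (X : {set E}) : bool := lam X <= k.

Definition kseparation (X Y : {set E}) : Prop := Y = ~: X /\ kseparating X.

Definition tangle (T : {set {set E}}) : Prop :=
  (forall A, A \in T -> lam A < k) /\
  (forall A, lam A <= k - 1 -> A \in T \/ ~: A \in T) /\
  (forall A B C, A \in T -> B \in T -> C \in T -> A :|: B :|: C != setT) /\
  (forall e : E, ~: [set e] \notin T).

Variable T : {set {set E}}.

Definition Tweak (X : {set E}) : bool := [exists A in T, X \subset A].
Definition Tstrong (X : {set E}) : bool := ~~ Tweak X.

Definition fully_closed (X : {set E}) : bool :=
  [&& Tstrong X, kseparating X &
   [forall Y : {set E}, [&& Y != set0, Tweak Y & Y \subset ~: X] ==>
      ~~ kseparating (X :|: Y)]].

Definition fcl (X : {set E}) : {set E} :=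
  \bigcap_(Z : {set E} | [&& fully_closed Z, kseparating Z & X \subset Z]) Z.

Definition Tequivalent (X Y X' Y' : {set E}) : Prop :=
  [set fcl X; fcl Y] = [set fcl X'; fcl Y'].

Definition Tsequential (X : {set E}) : Prop :=
  kseparating X /\ Tstrong (~: X) /\ fcl (~: X) = setT.

Definition nonsequential (X Y : {set E}) : Prop :=
  kseparation X Y /\ ~ Tsequential X /\ ~ Tsequential Y.

End Tangles.

(* Main.v *)
Require Import Defs.
From mathcomp Require Import all_boot all_order all_algebra.
From mathcomp Require Import zify.
Set Implicit Arguments. Unset Strict Implicit. Unset Printing Implicit Defensive.
Import Order.TTheory GRing.Theory Num.Theory.
Local Open Scope ring_scope.

Lemma weak_sub (E : finType) (T : {set {set E}}) (X Y : {set E}) :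
  Y \subset X -> Tweak T X -> Tweak T Y.
Proof.
move=> sYX /existsP [A /andP [AT sXA]]; apply/existsP; exists A.
by rewrite AT (subset_trans sYX sXA).
Qed.

Lemma strong_sup (E : finType) (T : {set {set E}}) (X Y : {set E}) :
  X \subset Y -> Tstrong T X -> Tstrong T Y.
Proof. by move=> sXY; apply: contra; apply: weak_sub. Qed.

Lemma lam_ge (E : finType) (lam : {set E} -> int) (k : int) (T : {set {set E}})
  (X : {set E}) :
  tangle lam k T -> Tstrong T X -> Tstrong T (~: X) -> k <= lam X.
Proof.
move=> [_ [T2 _]] sX sCX.
case: (lerP k (lam X)) => // lt.
have : lam X <= k - 1 by lia.
move=> /T2 [] XT.
- by move: sX; rewrite /Tstrong; case/negP; apply/existsP; exists X; rewrite XT subxx.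
- by move: sCX; rewrite /Tstrong; case/negP; apply/existsP; exists (~: X); rewrite XT subxx.
Qed.

Lemma uncross (E : finType) (lam : {set E} -> int) (k : int) (T : {set {set E}})
  (S1 S2 : {set E}) :
  connectivity_system lam -> tangle lam k T ->
  kseparating lam k S1 -> kseparating lam k S2 ->
  Tstrong T (S1 :&: S2) -> Tstrong T (~: (S1 :&: S2)) ->
  kseparating lam k (S1 :|: S2).
Proof.
move=> [_ sub] tg k1 k2 s1 s2.
have := lam_ge tg s1 s2; have := sub S1 S2.
move: k1 k2; rewrite /kseparating => k1 k2 h1 h2; lia.
Qed.

Lemma lamT_le (E : finType) (lam : {set E} -> int) (k : int) (Z : {set E}) :
  connectivity_system lam -> kseparating lam k Z -> kseparating lam k setT.
Proof.
move=> [sym sub] kZ.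
have := sub Z (~: Z); rewrite setUCr setICr.
have := sym set0; rewrite setC0 => e0.
have := sym Z; move: kZ; rewrite /kseparating => kZ eZ; rewrite e0; lia.
Qed.

Lemma fc_compl_strong (E : finType) (lam : {set E} -> int) (k : int)
  (T : {set {set E}}) (Z : {set E}) :
  connectivity_system lam -> fully_closed lam k T Z -> Z != setT ->
  Tstrong T (~: Z).
Proof.
move=> cs /and3P [sZ kZ /forallP fZ] nZ.
apply/negP => wZ.
have := fZ (~: Z); rewrite wZ subxx andbT setUCr.
have -> : (~: Z != set0) by apply: contra nZ => /eqP h; rewrite -(setCK Z) h setC0.
by rewrite (lamT_le cs kZ).
Qed.

Inductive RR (E : finType) (lam : {set E} -> int) (k : int) (T : {set {set E}})
  (X : {set E}) : {set E} -> Prop :=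
| RR0 : RR lam k T X X
| RRS : forall S Y, RR lam k T X S -> Tweak T Y -> kseparating lam k (S :|: Y) ->
    RR lam k T X (S :|: Y).

Lemma RR_inv (E : finType) (lam : {set E} -> int) (k : int) (T : {set {set E}})
  (X S : {set E}) :
  RR lam k T X S -> kseparating lam k X -> X \subset S /\ kseparating lam k S.
Proof.
elim=> [|S0 Y _ IH _ kSY] kX; first by rewrite subxx.
by case: (IH kX) => sXS _; split => //; rewrite (subset_trans sXS) // subsetUl.
Qed.

Lemma RR_incl (E : finType) (lam : {set E} -> int) (k : int) (T : {set {set E}})
  (X S : {set E}) : RR lam k T X S -> X \subset S.
Proof.
elim=> [|S0 Y _ IH _ _]; first exact: subxx.
by rewrite (subset_trans IH) // subsetUl.
Qed.

Lemma RR_sub (E : finType) (lam : {set E} -> int) (k : int) (T : {set {set E}})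
  (X S Z : {set E}) :
  connectivity_system lam -> tangle lam k T ->
  RR lam k T X S -> Tstrong T X -> fully_closed lam k T Z -> X \subset Z ->
  S \subset Z.
Proof.
move=> cs tg rr sX fZ sXZ.
have [->|nZ] := eqVneq Z setT; first exact: subsetT.
have sCZ := fc_compl_strong cs fZ nZ.
move: fZ => /and3P [sZ kZ /forallP fZ].
elim: rr => [//|S0 Y rr IH wY kSY].
have sXS := RR_incl rr.
have ku : kseparating lam k (Z :|: (S0 :|: Y)).
  apply: (uncross cs tg kZ kSY).
    apply: (strong_sup _ sX); by rewrite subsetI sXZ (subset_trans sXS) // subsetUl.
  apply: (strong_sup _ sCZ); by rewrite setCS subsetIl.
apply/negPn/negP => nsub.
have := fZ ((S0 :|: Y) :\: Z).
have -> : Z :|: (S0 :|: Y) :\: Z = Z :|: (S0 :|: Y).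
  by apply/setP => x; rewrite !inE; case: (x \in Z).
rewrite ku /= implybF => /negP; apply.
apply/and3P; split.
- apply/set0Pn; case/subsetPn: nsub => x xin xnZ; exists x; by rewrite inE xnZ.
- apply: weak_sub wY; apply/subsetP => x; rewrite !inE => /andP [xnZ /orP [xS|//]].
  by move/subsetP: IH => /(_ x xS); rewrite (negbTE xnZ).
- by apply/subsetP => x; rewrite !inE => /andP [].
Qed.

Lemma ks_compl (E : finType) (lam : {set E} -> int) (k : int) (X : {set E}) :
  connectivity_system lam -> kseparating lam k X -> kseparating lam k (~: X).
Proof. by move=> [sym _]; rewrite /kseparating -sym. Qed.

Lemma RR_rev (E : finType) (lam : {set E} -> int) (k : int) (T : {set {set E}})
  (X S Z W : {set E}) :
  connectivity_system lam -> tangle lam k T ->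
  RR lam k T X S -> Tstrong T X -> kseparating lam k X ->
  fully_closed lam k T Z -> Tstrong T W -> W \subset Z -> W \subset ~: S ->
  ~: S \subset Z -> ~: X \subset Z.
Proof.
move=> cs tg rr sX kX fZ sW sWZ.
have fZ' := fZ; move: fZ' => /and3P [sZ kZ /forallP fZ'].
elim: rr => [//|S0 Y rr IH wY kSY] sWS sSZ.
have [sXS kS0] := RR_inv rr kX.
have sWS0 : W \subset ~: S0.
  by rewrite (subset_trans sWS) // setCS subsetUl.
have ku : kseparating lam k (Z :|: ~: S0).
  apply: (uncross cs tg kZ (ks_compl cs kS0)).
    by apply: (strong_sup _ sW); rewrite subsetI sWZ.
  by apply: (strong_sup _ sX); rewrite setCI setCK (subset_trans sXS) // subsetUr.
apply: IH => //.
apply/negPn/negP => nsub.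
have := fZ' (~: S0 :\: Z).
have -> : Z :|: (~: S0 :\: Z) = Z :|: ~: S0.
  by apply/setP => x; rewrite !inE; case: (x \in Z).
rewrite ku /= implybF => /negP; apply.
apply/and3P; split.
- apply/set0Pn; case/subsetPn: nsub => x xin xnZ; exists x; by rewrite inE xnZ xin.
- apply: weak_sub wY; apply/subsetP => x; rewrite !inE => /andP [xnZ xnS0].
  move/subsetP: sSZ => /(_ x); rewrite !inE (negbTE xnS0) (negbTE xnZ) /=.
  by case: (x \in Y) => // /(_ isT).
- by apply/subsetP => x; rewrite !inE => /andP [].
Qed.

Lemma RR_exists (E : finType) (lam : {set E} -> int) (k : int) (T : {set {set E}})
  (X : {set E}) :
  Tstrong T X -> kseparating lam k X ->
  exists S, RR lam k T X S /\ fully_closed lam k T S.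
Proof.
move=> sX kX.
suff H : forall n S, (#|~: S| <= n)%N -> RR lam k T X S ->
  exists S, RR lam k T X S /\ fully_closed lam k T S.
  by apply: (H _ X (leqnn _)); constructor.
elim=> [|n IH] S cS rr.
- exists S; split => //.
  have [sXS kS] := RR_inv rr kX.
  rewrite /fully_closed (strong_sup sXS sX) kS /=.
  apply/forallP => Y; apply/implyP => /and3P [nY _ sY].
  move: cS; rewrite leqn0 cards_eq0 => /eqP e.
  by move: sY; rewrite e subset0 (negbTE nY).
- have [sXS kS] := RR_inv rr kX.
  case fS: (fully_closed lam k T S); first by exists S.
  move: fS; rewrite /fully_closed (strong_sup sXS sX) kS /= => /negbT.
  case/forallPn => Y; rewrite negb_imply negbK => /andP [/and3P [nY wY sY] kSY].
  apply: (IH (S :|: Y)); last by constructor.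
  rewrite -ltnS; apply: (leq_trans _ cS); apply: proper_card.
  apply/properP; split; first by rewrite setCS subsetUl.
  case/set0Pn: nY => y yY; exists y.
    by move/subsetP: sY; apply.
  by rewrite !inE yY orbT.
Qed.

Lemma fcl_eq (E : finType) (lam : {set E} -> int) (k : int) (T : {set {set E}})
  (X S : {set E}) :
  connectivity_system lam -> tangle lam k T ->
  RR lam k T X S -> Tstrong T X -> fully_closed lam k T S -> fcl lam k T X = S.
Proof.
move=> cs tg rr sX fS; apply/eqP; rewrite eqEsubset; apply/andP; split.
- have := @bigcap_inf _ _ S (fun Z => [&& fully_closed lam k T Z, kseparating lam k Z & X \subset Z]) id.
  apply.
  by move: (fS) => /and3P [_ kS _]; rewrite fS kS (RR_incl rr).
- apply/bigcapsP => Z /and3P [fZ _ sXZ]; exact: (RR_sub cs tg rr sX fZ sXZ).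
Qed.

Lemma key (E : finType) (lam : {set E} -> int) (k : int) (T : {set {set E}})
  (A : {set E}) :
  connectivity_system lam -> tangle lam k T ->
  kseparating lam k A -> ~ Tsequential lam k T A -> ~ Tsequential lam k T (~: A) ->
  fcl lam k T (~: A) = fcl lam k T (~: fcl lam k T A).
Proof.
move=> cs tg kA nsA nsB.
have sA : Tstrong T A.
  apply/negP => wA; apply: nsA; split => //; split.
    apply/negP => /existsP [T2 /andP [T2T sT2]].
    move: wA => /existsP [T1 /andP [T1T sT1]].
    move: tg => [_ [_ [T3 _]]].
    move: (T3 _ _ _ T1T T2T T2T); rewrite -setUA setUid => /negP; apply.
    apply/eqP/setP => x; rewrite !inE.
    case xA: (x \in A); first by rewrite (subsetP sT1).
    by rewrite (subsetP sT2) ?orbT // inE xA.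
  rewrite /fcl; apply: big1 => Z /and3P [fZ kZ sZ].
  apply/eqP; apply/negPn/negP => nZ.
  have := fc_compl_strong cs fZ nZ; rewrite /Tstrong => /negP; apply.
  by apply: (weak_sub _ wA); rewrite -setCS setCK.
have nT : fcl lam k T A != setT.
  apply/eqP => e; apply: nsB; split; first exact: ks_compl.
  by rewrite setCK.
have [S [rr fS]] := RR_exists sA kA.
have eS := fcl_eq cs tg rr sA fS.
rewrite eS in nT *.
have sCS := fc_compl_strong cs fS nT.
have sAS := RR_incl rr.
rewrite /fcl; apply: eq_bigl => Z.
case fZ: (fully_closed lam k T Z) => //=.
case: (kseparating lam k Z) => //=.
apply/idP/idP => h.
- by apply: subset_trans h; rewrite setCS.
- exact: (RR_rev cs tg rr sA kA fZ sCS h (subxx _) h).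
Qed.

Theorem lemma3p7 (E : finType) (lam : {set E} -> int) (k : int)
  (T : {set {set E}}) (A B C D : {set E}) :
  connectivity_system lam ->
  tangle lam k T ->
  nonsequential lam k T A B ->
  nonsequential lam k T C D ->
  (Tequivalent lam k T A B C D <->
   (fcl lam k T A = fcl lam k T C \/ fcl lam k T A = fcl lam k T D)).
Proof.
move=> cs tg [[eB kA] [nA nB]] [[eD kC] [nC nD]].
rewrite /Tequivalent; split.
- move=> e; have : fcl lam k T A \in [set fcl lam k T C; fcl lam k T D].
    by rewrite -e !inE eqxx.
  by case/set2P; [left|right].
- have kB : fcl lam k T B = fcl lam k T (~: fcl lam k T A).
    by rewrite eB; apply: key => //; rewrite -eB.
  have kD : fcl lam k T D = fcl lam k T (~: fcl lam k T C).
    by rewrite eD; apply: key => //; rewrite -eD.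
  have kDs : kseparating lam k D by rewrite eD; exact: ks_compl.
  have nC' : ~ Tsequential lam k T (~: D) by rewrite eD setCK.
  have kC' := key cs tg kDs nD nC'.
  rewrite eD setCK in kC'; rewrite -eD in kC'.
  case=> e.
  + by rewrite kB kD e.
  + by rewrite kB e -kC' setUC.
Qed.
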